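(* Let $s,k$ be integers with $2\le s\le k$ and let $q$ be a prime power. If $q=2$, then \[b_q(k,s)\le \frac{s(k-s)+s+2}{\log_q\frac{q^s}{q^s-1}}+1.\] If $q\ge 3$, then \[b_q(k,s)\le (q^s-1)\cdot\frac{s(k-s)+s+2}{\log_q\left(\frac{q^4}{q^3-q+1}\right)}+1.\]
   Context: $\mathbb{F}_q^k$ is viewed as an affine space whose subspaces are the cosets (translates) of vector subspaces of $\mathbb{F}_q^k$; the codimension of an $i$-dimensional affine subspace is $k-i$. An (affine) $s$-blocking set in $\mathbb{F}_q^k$ is a set of points of $\mathbb{F}_q^k$ that contains at least one point of every affine subspace of dimension $k-s$. $b_q(k,s)$ denotes the smallest size of an $s$-blocking set in $\mathbb{F}_q^k$. *)

(* Defs.v *)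
From Stdlib Require Import Reals.
From mathcomp Require Import all_boot all_algebra.

Set Implicit Arguments.
Unset Strict Implicit.
Unset Printing Implicit Defensive.

Import GRing.Theory.

(* Points of F^k are row vectors 'rV[F]_k.  An affine subspace of dimension
   d is a coset  v + rowspace(U)  with U : 'M[F]_k of rank d; it consists of
   the x with (x - v <= U)%MS. *)
Definition in_affine (F : finFieldType) (k : nat) (v : 'rV[F]_k) (U : 'M[F]_k)
  (x : 'rV[F]_k) : bool := (GRing.add x (GRing.opp v) <= U)%MS.

Definition blocking (F : finFieldType) (k s : nat) (B : {set 'rV[F]_k}) : bool :=
  [forall v : 'rV[F]_k, forall U : 'M[F]_k,
     (\rank U == k - s)%N ==> [exists x in B, in_affine v U x]].

(* b_q(k,s): the smallest size of an s-blocking set in F^k (q = #|F|).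
   The whole space is always s-blocking, so the minimum exists. *)
Definition bq (F : finFieldType) (k s : nat) : nat :=
  #|[arg min_(B < [set: 'rV[F]_k] | blocking s B) #|B|]|.

Definition logb (b x : R) : R := Rdiv (ln x) (ln b).

(* Main.v *)
Require Import Defs.
From Stdlib Require Import Reals Lra Lia ZArith ArithRing.
From mathcomp Require Import all_boot all_algebra zify.

Set Implicit Arguments.
Unset Strict Implicit.
Unset Printing Implicit Defensive.

Lemma key_ineq r b :
  ((b + r.+2 * r.+2) * ((r * r + 3 * r + 1) * (b + r.+2 * r.+2) * r.+2 + r.+2 * r.+2) <=
   r.+2 * ((r * r + 3 * r + 1) * (b + r.+2 * r.+2) + r.+2 * r.+2) * (b + (r * r + 4 * r + 3)))%N.
Proof.
set L := (X in (X <= _)%N).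
have E : (r.+2 * ((r * r + 3 * r + 1) * (b + r.+2 * r.+2) + r.+2 * r.+2) * (b + (r * r + 4 * r + 3)) = L + r.+2 * b)%N.
  rewrite /L -!multE -!plusE; ring.
by rewrite E leq_addr.
Qed.

Lemma step_ineq q a X Q : (2 <= q)%N -> (q * q <= a)%N ->
  (Q * ((q * q - q - 1) * a + q * q) <= X * (a * q * q))%N ->
  (Q * a * ((q * q - q - 1) * (a * q) + q * q) <= X * (a - 1) * (a * q * q * q))%N.
Proof.
case: q => [|[|r]] // _ qa.
have [b ->] : exists b, a = (b + r.+2 * r.+2)%N by exists (a - r.+2 * r.+2)%N; lia.
have e1 : (r.+2 * r.+2 - r.+2 - 1 = r * r + 3 * r + 1)%N by lia.
have e2 : (b + r.+2 * r.+2 - 1 = b + (r * r + 4 * r + 3))%N by lia.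
rewrite e1 e2 => IH.
have k := leq_mul (leqnn Q) (key_ineq r b).
have h := leq_mul IH (leqnn (r.+2 * (b + (r * r + 4 * r + 3)))).
lia.
Qed.

Lemma C2 s : ('C(s, 2) + 'C(s.+1, 2) = s * s)%N.
Proof.
elim: s => // s IH.
have h1 := binS s.+1 1; have h2 := binS s 1; rewrite !bin1 in h1 h2.
rewrite h1 h2 in IH *; lia.
Qed.

Definition Pr q s := (\prod_(1 <= i < s.+1) (q ^ i - 1))%N.

Lemma prod_lower q s : (2 <= q)%N -> (0 < s)%N ->
  (q ^ 'C(s.+1, 2) * ((q * q - q - 1) * q ^ (s + 1) + q * q) <= Pr q s * q ^ (s + 3))%N.
Proof.
move=> q2; elim: s => // s IH _.
case: s IH => [_|s IH].
  rewrite /Pr big_nat1 /= (_ : 'C(2, 2) = 1)%N // !expnS !expn0 !muln1.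
  case: q q2 => [|[|r]] // _.
  have e1 : (r.+2 * r.+2 - r.+2 - 1 = r * r + 3 * r + 1)%N by lia.
  have e2 : (r.+2 - 1 = r.+1)%N by lia.
  rewrite e1 e2; apply: eq_leq; rewrite -!multE -!plusE; ring.
have IH' := IH isT.
rewrite /Pr big_nat_recr //= -/(Pr q s.+1).
have hb := binS s.+2 1; rewrite bin1 in hb; rewrite hb expnD.
set a := (q ^ s.+2)%N.
have e1 : (q ^ (s.+1 + 1) = a)%N by rewrite addn1.
have e2 : (q ^ (s.+1 + 3) = a * q * q)%N by rewrite /a -!expnSr addnS addnS addn1.
have e3 : (q ^ (s.+2 + 1) = a * q)%N by rewrite /a -expnSr addn1.
have e4 : (q ^ (s.+2 + 3) = a * q * q * q)%N by rewrite /a -!expnSr addnS addnS addn1.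
rewrite e1 e2 in IH'; rewrite e3 e4 mulnA.
have qa : (q * q <= a)%N.
  by rewrite /a -[(q * q)%N]/(q ^ 2)%N leq_pexp2l // (leq_trans _ q2).
clearbody a.
move: (@step_ineq q a _ _ q2 qa IH'); by rewrite !mulnA.

Qed.

Lemma fin3 (A B C E G SS P2 N Q4 K Q2 : nat) :
  (0 < N)%N -> (0 < Q2)%N -> (0 < SS)%N ->
  (A * B * Q2 = SS * P2)%N ->
  (P2 * (C * N) < E * Q4)%N ->
  (SS * K <= G * Q2)%N ->
  (Q4 <= K * N)%N ->
  (A * (B - 1) * C < G * E)%N.
Proof.
move=> N0 Q20 S0 e H GL NN.
rewrite -(ltn_pmul2r N0) -(ltn_pmul2r Q20).
apply: (@leq_ltn_trans (SS * (P2 * (C * N)))).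
  have -> : (SS * (P2 * (C * N)) = A * B * C * N * Q2)%N.
    by rewrite mulnA -e; lia.
  by rewrite !leq_mul2r leq_mul2l leq_subr !orbT.
apply: (@leq_trans (SS * (E * Q4))).
  by rewrite ltn_pmul2l.
apply: (@leq_trans (SS * (E * (K * N)))).
  by rewrite leq_mul2l leq_mul2l NN !orbT.
have := leq_mul GL (leqnn (E * N)).
lia.
Qed.

Lemma fin2 (A B C E G SS P2 : nat) :
  (0 < B)%N -> (0 < SS)%N ->
  (A * 4 * B = SS * P2)%N ->
  (P2 * (C * (B - 1)) < E * B)%N ->
  (SS <= G * 4)%N ->
  (A * (B - 1) * C < G * E)%N.
Proof.
move=> B0 S0 e H GL.
rewrite -(ltn_pmul2r B0) -(ltn_pmul2r (isT : 0 < 4)%N).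
apply: (@leq_ltn_trans (SS * (P2 * (C * (B - 1))))).
  have -> : (SS * (P2 * (C * (B - 1))) = A * (B - 1) * C * B * 4)%N.
    by rewrite mulnA -e; lia.
  by [].
apply: (@leq_trans (SS * (E * B))).
  by rewrite ltn_pmul2l.
have := leq_mul GL (leqnn (E * B)).
lia.
Qed.


Lemma NN_ineq q : (3 <= q)%N -> (q ^ 4 <= (q * q - q - 1) * (q * q * q - q + 1))%N.
Proof.
case: q => [|[|[|r]]] // _.
have e1 : (r.+3 * r.+3 - r.+3 - 1 = r * r + 5 * r + 5)%N by lia.
have e2 : (r.+3 * r.+3 * r.+3 - r.+3 + 1 = r * r * r + 9 * r * r + 26 * r + 25)%N by lia.
rewrite e1 e2 !expnS expn0.
set L := (X in (X <= _)%N).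
have E : ((r * r + 5 * r + 5) * (r * r * r + 9 * r * r + 26 * r + 25) =
   L + (r * r * r * r * r + 13 * r * r * r * r + 64 * r * r * r + 146 * r * r + 147 * r + 44))%N.
  rewrite /L -!multE -!plusE; ring.
by rewrite E leq_addr.
Qed.

Section RealPart.
Local Open Scope R_scope.

Lemma INR_muln m n : INR (m * n)%N = (INR m * INR n).
Proof. by rewrite -multE mult_INR. Qed.

Lemma INR_expn b n : INR (b ^ n)%N = (INR b ^ n).
Proof. elim: n => [|n IH] //=; by rewrite expnS INR_muln IH. Qed.

Lemma real_key (b N D n T : nat) : (1 < b)%N -> (0 < N)%N -> (N < D)%N ->
  (INR n * ln (INR b) / ln (INR D / INR N) < INR T) -> (b ^ n * N ^ T < D ^ T)%N.
Proof.
move=> b1 N0 ND H.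
apply/ltP; apply: INR_lt.
rewrite INR_muln !INR_expn.
have hb : (1 < INR b) by apply: (lt_INR 1); apply/ltP.
have hN : (0 < INR N) by apply: (lt_INR 0); apply/ltP.
have hD : (INR N < INR D) by apply: lt_INR; apply/ltP.
have hr : (1 < INR D / INR N).
  by apply: (Rmult_lt_reg_r (INR N)) => //; field_simplify; lra.
have hl : (0 < ln (INR D / INR N)) by rewrite -ln_1; apply: ln_increasing; lra.
have H2 : (INR n * ln (INR b) < INR T * ln (INR D / INR N)).
  replace (INR n * ln (INR b)) with (INR n * ln (INR b) / ln (INR D / INR N) * ln (INR D / INR N)).
    by apply: Rmult_lt_compat_r.
  by field; lra.
apply: ln_lt_inv.
- apply: Rmult_lt_0_compat; apply: pow_lt; lra.
- apply: pow_lt; lra.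
rewrite ln_mult; try (apply: pow_lt; lra).
rewrite !ln_pow; try lra.
rewrite /Rdiv ln_mult ?ln_Rinv in H2; try apply: Rinv_0_lt_compat; lra.
Qed.

Lemma floor_nat (X : R) : (0 <= X) -> exists T : nat, (INR T <= X /\ X < INR T + 1).
Proof.
move=> X0.
have [h1 h2] := archimed X.
have z1 : Z.le 1 (up X).
  have : (0 < IZR (up X)) by lra.
  move/lt_0_IZR; lia.
exists (Z.to_nat (up X - 1)).
rewrite INR_IZR_INZ Z2Nat.id; last lia.
rewrite minus_IZR; lra.
Qed.

Lemma choose_T (b N D n : nat) : (1 < b)%N -> (0 < N)%N -> (N < D)%N ->
  exists T : nat, (b ^ n * N ^ T.+1 < D ^ T.+1)%N /\
     INR T <= Rdiv (INR n) (Defs.logb (INR b) (INR D / INR N)).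
Proof.
move=> b1 N0 ND.
have hb : 1 < INR b by apply: (lt_INR 1); apply/ltP.
have hN : 0 < INR N by apply: (lt_INR 0); apply/ltP.
have hD : INR N < INR D by apply: lt_INR; apply/ltP.
have hr : 1 < INR D / INR N.
  by apply: (Rmult_lt_reg_r (INR N)) => //; field_simplify; lra.
have hl : 0 < ln (INR D / INR N) by rewrite -ln_1; apply: ln_increasing; lra.
have hlb : 0 < ln (INR b) by rewrite -ln_1; apply: ln_increasing; lra.
have EY : Rdiv (INR n) (Defs.logb (INR b) (INR D / INR N)) = INR n * ln (INR b) / ln (INR D / INR N).
  by rewrite /Defs.logb; field; split; lra.
have Y0 : 0 <= INR n * ln (INR b) / ln (INR D / INR N).
  apply: Rmult_le_pos; last by apply: Rlt_le; apply: Rinv_0_lt_compat.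
  by apply: Rmult_le_pos; [apply: pos_INR | lra].
have [T [h1 h2]] := floor_nat Y0.
exists T; split; last by rewrite EY.
by apply: real_key => //; rewrite S_INR.
Qed.

Lemma fin_real1 (bq T : nat) (Y : R) : (bq <= T.+1)%N -> INR T <= Y -> INR bq <= Y + 1.
Proof.
move=> /leP h hT; have := le_INR _ _ h; rewrite S_INR; lra.
Qed.

Lemma fin_real2 (bq T m : nat) (Y : R) : (bq <= 1 + T * m)%N -> INR T <= Y ->
  INR bq <= INR m * Y + 1.
Proof.
move=> /leP h hT; have := le_INR _ _ h; rewrite -plusE -multE plus_INR mult_INR /=.
have := pos_INR m; nra.
Qed.

Lemma INR_sub1 n : (0 < n)%N -> INR n - 1 = INR (n - 1).
Proof. by move=> n0; rewrite -minusE minus_INR //; apply/leP. Qed.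

Lemma INR_cubic Q : (1 <= Q)%N -> pow (INR Q) 3 - INR Q + 1 = INR (Q * Q * Q - Q + 1).
Proof.
move=> Q1; rewrite -INR_expn -plusE plus_INR -minusE minus_INR; last first.
  by apply/leP; rewrite -mulnA leq_pmulr // muln_gt0 Q1.
have e : (Q ^ 3 = Q * Q * Q)%N by rewrite !expnS expn0 muln1 mulnA.
by rewrite e.
Qed.

Lemma rdiv_mul a b L : Rdiv (Rmult a b) L = Rmult a (Rdiv b L).
Proof. by rewrite /Rdiv Rmult_assoc. Qed.

End RealPart.

Lemma nat_ineq q x y : (2 <= q)%N -> (x <= y)%N ->
  (x * x + (q * q * y - x) * (q * x) <= y * y * (q * q * q - q + 1))%N.
Proof.
move=> q2 /subnKC <-; set d := (y - x)%N; clearbody d.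
case: q q2 => [|[|r]] // _.
have e1 : (r.+2 * r.+2 * (x + d) - x = (r.+2 * r.+2 - 1) * x + r.+2 * r.+2 * d)%N by nia.
have e2 : (r.+2 * r.+2 * r.+2 - r.+2 + 1 = r.+2 * (r.+2 * r.+2 - 1) + 1)%N by nia.
have e3 : (r.+2 * r.+2 - 1 = r * r + 4 * r + 3)%N by nia.
rewrite e1 e2 e3.
nia.
Qed.

Import GRing.Theory.

Section Counting.
Local Open Scope ring_scope.
Variable F : finFieldType.
Local Notation q := #|F|.

Lemma fiber_count p k s (M : 'M[F]_(k,s)) (P : pred 'M[F]_(p,s)) : row_full M ->
  (#|[set X : 'M_(p,k) | P (X *m M)]| * q^(p*s) = #|[set Y | P Y]| * q^(p*k))%N.
Proof.
move=> /row_fullP [N NM].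
pose K := [set X : 'M[F]_(p,k) | X *m M == 0].
have fib Y : #|[set X : 'M[F]_(p,k) | X *m M == Y]| = #|K|.
  rewrite -(card_imset K (addrI (Y *m N))); apply: eq_card => X.
  rewrite inE; apply/eqP/imsetP => [XY|[X' X'K ->]].
    exists (X - Y *m N); last by rewrite addrC subrK.
    by rewrite inE mulmxBl -mulmxA NM mulmx1 XY subrr.
  by move: X'K; rewrite inE mulmxDl -mulmxA NM mulmx1 => /eqP ->; rewrite addr0.
have cnt (Q : pred 'M[F]_(p,s)) : #|[set X : 'M[F]_(p,k) | Q (X *m M)]| = (#|[set Y | Q Y]| * #|K|)%N.
  rewrite -sum1_card (partition_big (fun X => X *m M) (mem [set Y | Q Y])) /=; last first.
    by move=> X; rewrite !inE.
  rewrite -sum_nat_const; apply: eq_bigr => Y YQ.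
  rewrite -(fib Y) -sum1_card; apply: eq_bigl => X; rewrite !inE.
  by case: eqP => [->|]; rewrite ?andbT ?andbF //; move: YQ; rewrite inE.
have tot := cnt predT.
rewrite cardsT card_mx in tot.
have : #|[set Y : 'M[F]_(p,s) | predT Y]| = (q ^ (p * s))%N by rewrite cardsT card_mx.
move=> E; rewrite E in tot.
by rewrite cnt tot -mulnA (mulnC #|K|).
Qed.


Lemma affine_rep k s (v : 'rV[F]_k) (U : 'M[F]_k) : (s <= k)%N -> \rank U = (k - s)%N ->
  exists M : 'M[F]_(k,s), row_full M /\ forall x, in_affine v U x = (x *m M == v *m M).
Proof.
move=> sk rU.
have rC : \rank (cokermx U) = s by rewrite mxrank_coker rU subKn.
move: (col_base (cokermx U)) (row_base (cokermx U)) (mulmx_base (cokermx U))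
  (col_base_full (cokermx U)) (row_base_free (cokermx U)).
rewrite rC => Mc Rb eqC fullM freeR.
exists Mc; split => // x.
rewrite /in_affine submxE -eqC mulmxA -(mul0mx _ Rb) (inj_eq (row_free_inj freeR)).
by rewrite mulmxBl subr_eq0.
Qed.

Definition Hset k s (M : 'M[F]_(k,s)) (c : 'rV[F]_s) : {set 'rV[F]_k} :=
  [set x | x *m M == c].

Definition GLset s := [set G : 'M[F]_s | G \in unitmx].

Lemma card_GLset s : (0 < s)%N -> #|GLset s| = #|('GL_s[F])%g|.
Proof.
case: s => // n _.
rewrite cardsT /= card_sub; apply: eq_card => A; rewrite inE //.
Qed.

Definition Bset k T (Om : finType) (S : Om -> {set 'rV[F]_k}) (t : {ffun 'I_T -> Om}) :=
  0 |: \bigcup_(i < T) S (t i).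

Lemma leq_expr m n e : (m <= n -> m ^ e <= n ^ e)%N.
Proof. by move=> mn; elim: e => // e IH; rewrite !expnS leq_mul. Qed.

Lemma generic (k s T : nat) (Om : finType) (S : Om -> {set 'rV[F]_k}) (N D : nat) :
 (s <= k)%N ->
 (forall (M : 'M[F]_(k,s)) (c : 'rV[F]_s), row_full M -> c != 0%R ->
    #|[set w | [disjoint S w & Hset M c]]| * D <= N * #|Om|)%N ->
 (0 < #|Om|)%N ->
 (q^(k*s) * (q^s - 1) * N ^ T < #|GLset s| * D ^ T)%N ->
 exists t : {ffun 'I_T -> Om}, blocking s (Bset S t).
Proof.
move=> sk hmiss Om0 hineq.
case: (boolP [exists t : {ffun 'I_T -> Om}, blocking s (Bset S t)]) => [/existsP [t bt]|nb]; first by exists t.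
exfalso.
pose Pairs := [set p : 'M[F]_(k,s) * 'rV[F]_s | row_full p.1 && (p.2 != 0)].
pose Bad (t : {ffun 'I_T -> Om}) (p : 'M[F]_(k,s) * 'rV[F]_s) :=
  [forall i, [disjoint S (t i) & Hset p.1 p.2]].
pose C := (\sum_t #|[set p in Pairs | Bad t p]|)%N.
have lower : (#|Om| ^ T * #|GLset s| <= C)%N.
  have -> : (#|Om| ^ T = #|{ffun 'I_T -> Om}|)%N by rewrite card_ffun card_ord.
  rewrite -sum_nat_const.
  apply: leq_sum => t _.
  have := nb; rewrite negb_exists => /forallP /(_ t).
  rewrite /blocking negb_forall => /existsP [v]; rewrite negb_forall => /existsP [U].
  rewrite negb_imply => /andP [/eqP rU].
  rewrite negb_exists => /forallP nx.
  have [M [fM affM]] := affine_rep v sk rU.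
  have [Nl NM] := row_fullP fM.
  pose c := v *m M.
  have hx x : x \in Bset S t -> x *m M != c.
    by move=> xB; have := nx x; rewrite xB /= affM.
  have c0 : c != 0.
    by have := hx 0; rewrite mul0mx eq_sym; apply; rewrite /Bset setU11.
  pose f (G : 'M[F]_s) := (M *m G, c *m G).
  have finj : injective f.
    move=> G1 G2 [] eM _; have := congr1 (mulmx Nl) eM; by rewrite !mulmxA NM !mul1mx.
  rewrite -(card_imset _ finj); apply: subset_leq_card.
  apply/subsetP => y /imsetP [G]; rewrite inE => Gu ->.
  rewrite !inE /=; apply/andP; split; first (apply/andP; split).
  - by rewrite /row_full mxrankMfree ?row_free_unit //.
  - apply: contra c0 => /eqP cG0.
    by rewrite -(mulmxK Gu c) cG0 mul0mx.
  - apply/forallP => i; rewrite -setI_eq0; apply/eqP/setP => x.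
    rewrite !inE mulmxA (can_eq (mulmxK Gu)).
    case xS: (x \in S (t i)) => //=.
    apply/negbTE/hx; rewrite /Bset !inE; apply/orP; right.
    by apply/bigcupP; exists i.
pose m (p : 'M[F]_(k,s) * 'rV[F]_s) := #|[set w | [disjoint S w & Hset p.1 p.2]]|.
have eqC : C = (\sum_(p in Pairs) m p ^ T)%N.
  transitivity (\sum_t \sum_(p in Pairs) (Bad t p : nat))%N.
    apply: eq_bigr => t _; rewrite -sum1_card big_mkcond /= [RHS]big_mkcond /=.
    by apply: eq_bigr => p _; rewrite inE; case: (p \in Pairs); case: (Bad t p).
  rewrite exchange_big; apply: eq_bigr => p _.
  have -> : (m p ^ T = #|[set t | Bad t p]|)%N.
    rewrite -[T in LHS]card_ord -card_ffun_on; apply: eq_card => t; rewrite inE.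
    apply/ffun_onP/forallP => h i; move: (h i); by rewrite inE.
  by rewrite -sum1_card [RHS]big_mkcond /=; apply: eq_bigr => t _; rewrite inE; case: (Bad t p).
have upper : (C * D ^ T <= #|Pairs| * (N ^ T * #|Om| ^ T))%N.
  rewrite eqC big_distrl /= -sum_nat_const; apply: leq_sum => p.
  rewrite inE => /andP [fp cp].
  by rewrite -!expnMn; apply: leq_expr; apply: hmiss.
have cardP : (#|Pairs| <= q ^ (k * s) * (q ^ s - 1))%N.
  have -> : (q ^ (k * s) * (q ^ s - 1) = #|setX [set: 'M[F]_(k,s)] [set~ (0%R : 'rV[F]_s)]|)%N.
    by rewrite cardsX cardsT cardsC1 !card_mx mul1n subn1.
  apply: subset_leq_card; apply/subsetP => p; rewrite !inE => /andP [_ ->].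
  by rewrite andbT.
have OmT : (0 < #|Om| ^ T)%N by rewrite expn_gt0 Om0.
have h3 := leq_trans (leq_trans (leq_mul lower (leqnn (D ^ T))) upper)
   (leq_mul cardP (leqnn (N ^ T * #|Om| ^ T))).
have h4 : (q ^ (k * s) * (q ^ s - 1) * N ^ T * #|Om| ^ T < #|GLset s| * D ^ T * #|Om| ^ T)%N
  by rewrite ltn_pmul2r.
have := leq_ltn_trans h3; rewrite !mulnA => /(_ _ h4).
by rewrite [(#|Om| ^ T * _)%N]mulnC -[(#|GLset s| * #|Om| ^ T * D ^ T)%N]mulnA [(#|Om| ^ T * D ^ T)%N]mulnC mulnA ltnn.
Qed.


Lemma core_count m :
  (#|[set x : 'cV[F]_(m.+2) * ('cV[F]_(m.+2) * 'M[F]_(m.+2, m)) |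
      [exists w : 'cV[F]_(1 + m), x.1 == row_mx x.2.1 x.2.2 *m w]]|
    <= q ^ (m.+2 * m) * (q ^ m * q ^ m * (q * q * q - q + 1)))%N.
Proof.
set P := (fun x : 'cV[F]_(m.+2) * ('cV[F]_(m.+2) * 'M[F]_(m.+2, m)) =>
      [exists w : 'cV[F]_(1 + m), x.1 == row_mx x.2.1 x.2.2 *m w]).
have E : #|[set x | P x]| = (\sum_(B1 : 'M[F]_(m.+2, m)) \sum_(b : 'cV[F]_(m.+2))
           #|[set u | P (u, (b, B1))]|)%N.
  rewrite -sum1_card big_mkcond /=.
  transitivity (\sum_(u : 'cV[F]_(m.+2)) \sum_(p : 'cV[F]_(m.+2) * 'M[F]_(m.+2, m))
       (if (u, p) \in [set x | P x] then 1 else 0))%N.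
    by rewrite pair_big /=; under [RHS]eq_bigr => p _ do rewrite -surjective_pairing.
  rewrite exchange_big /=.
  transitivity (\sum_(b : 'cV[F]_(m.+2)) \sum_(B1 : 'M[F]_(m.+2, m)) \sum_(u : 'cV[F]_(m.+2))
       (if (u, (b, B1)) \in [set x | P x] then 1 else 0))%N.
    by rewrite [RHS]pair_big /=; under [RHS]eq_bigr => p _ do rewrite -surjective_pairing.
  rewrite exchange_big /=; apply: eq_bigr => B1 _; apply: eq_bigr => b _.
  by rewrite -sum1_card [RHS]big_mkcond /=; apply: eq_bigr => u _; rewrite !inE.
have q2 : (2 <= q)%N by apply: card_finNzRing_gt1.
have per B1 : (\sum_b #|[set u | P (u, (b, B1))]| <= q ^ m * q ^ m * (q * q * q - q + 1))%N.
  pose V := [set B1 *m w | w : 'cV[F]_m].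
  have Vc : (#|V| <= q ^ m)%N.
    by apply: leq_trans (leq_imset_card _ _) _; rewrite card_mx muln1.
  have dec (b : 'cV[F]_(m.+2)) u : P (u, (b, B1)) ->
      exists w : 'cV[F]_(1 + m), u = b *m usubmx w + B1 *m dsubmx w.
    move=> /existsP [w /eqP /= ->]; exists w.
    by rewrite -{1}[w]vsubmxK mul_row_col.
  rewrite (bigID (mem V)) /=.
  have s1 : (\sum_(b | b \in V) #|[set u | P (u, (b, B1))]| <= #|V| * #|V|)%N.
    rewrite -sum_nat_const; apply: leq_sum => b /imsetP [v _ bv].
    apply: subset_leq_card; apply/subsetP => u; rewrite inE => /dec [w ->].
    apply/imsetP; exists (v *m usubmx w + dsubmx w) => //.
    by rewrite mulmxDr mulmxA bv.
  have s2 : (\sum_(b | b \notin V) #|[set u | P (u, (b, B1))]| <= #|~: V| * (q * #|V|))%N.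
    rewrite -sum_nat_const [X in (_ <= X)%N](eq_bigl (fun b => b \notin V)); last by move=> b; rewrite inE.
    apply: leq_sum => b _.
    pose f (p : 'cV[F]_(m.+2) * 'cV[F]_1) := p.1 + b *m p.2.
    apply: leq_trans (_ : #|f @: setX V [set: 'cV[F]_1]| <= _)%N.
      apply: subset_leq_card; apply/subsetP => u; rewrite inE => /dec [w ->].
      apply/imsetP; exists (B1 *m dsubmx w, usubmx w); last by rewrite /f /= addrC.
      by rewrite !inE /= andbT; apply/imsetP; exists (dsubmx w).
    by apply: leq_trans (leq_imset_card _ _) _; rewrite cardsX cardsT card_mx muln1 mulnC.
  have cV : (#|~: V| = q * q * q ^ m - #|V|)%N.
    by rewrite cardsCs setCK card_mx muln1 !expnS mulnA.
  apply: leq_trans (leq_add s1 _) _; first exact: s2.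
  by rewrite cV; apply: nat_ineq.
rewrite E; apply: (@leq_trans (\sum_(B1 : 'M[F]_(m.+2,m)) (q^m*q^m*(q*q*q-q+1)))%N).
  by apply: leq_sum => B1 _; apply: per.
by rewrite (@sum_nat_const _ predT) card_mx.
Qed.

Lemma split3_inj a n1 n2 n3 (R1 R2 : 'M[F]_(a, n1 + (n2 + n3))) :
  lsubmx R1 = lsubmx R2 -> lsubmx (rsubmx R1) = lsubmx (rsubmx R2) ->
  rsubmx (rsubmx R1) = rsubmx (rsubmx R2) -> R1 = R2.
Proof.
move=> h1 h2 h3; rewrite -[R1]hsubmxK -[R2]hsubmxK h1.
by rewrite -[rsubmx R1]hsubmxK -[rsubmx R2]hsubmxK h2 h3.
Qed.

Lemma col_dep k n (R : 'M[F]_(k, 1 + n)) :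
  ~~ (row_mx (1%:M : 'M[F]_1) (0 : 'M[F]_(1, n)) <= R)%MS ->
  exists w : 'cV[F]_n, lsubmx R = rsubmx R *m w.
Proof.
rewrite submxE => /matrix0Pn [i [j hij]].
pose z : 'M[F]_(1 + n, 1) := cokermx R *m delta_mx j 0.
have Rz : R *m z = 0 by rewrite /z mulmxA mulmx_coker mul0mx.
have ez : row_mx (1%:M : 'M[F]_1) (0 : 'M[F]_(1, n)) *m z = usubmx z.
  by rewrite -[z]vsubmxK mul_row_col mul1mx mul0mx addr0 col_mxKu.
have a0 : usubmx z 0 0 != 0.
  by rewrite -ez /z mulmxA -colE mxE -(ord1 i).
set a := usubmx z 0 0 in a0.
have := Rz; rewrite -[R]hsubmxK -[z]vsubmxK mul_row_col [usubmx z]mx11_scalar -/a.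
rewrite mul_mx_scalar => /eqP; rewrite addr_eq0 => /eqP ha.
rewrite hsubmxK; exists (- a^-1 *: dsubmx z).
by rewrite -scalemxAr scaleNr -scalerN -ha scalerA mulVf // scale1r.
Qed.

Lemma miss_count m (c : 'rV[F]_(m.+2)) : c != 0 ->
  (#|[set R : 'M[F]_(m.+2) | ~~ (c <= R)%MS]| * q ^ 4 <=
     (q * q * q - q + 1) * q ^ (m.+2 * m.+2))%N.
Proof.
move=> c0.
pose e1 : 'rV[F]_(m.+2) := (row_mx (1%:M : 'M[F]_1) (0 : 'M[F]_(1, m.+1)) : 'M[F]_(1, 1 + m.+1)).
have [Q Qu cQ] : exists2 Q : 'M[F]_(m.+2), Q \in unitmx & c = e1 *m Q.
  have := mulmx_ebase c; rewrite rank_rV c0 /=.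
  rewrite (@pid_mx_row _ m.+1 1) -/e1 [col_ebase c]mx11_scalar mul_scalar_mx -scalemxAl => ec.
  set a := col_ebase c 0 0 in ec.
  have a0 : a != 0.
    by apply: contra c0 => /eqP a0; rewrite -ec a0 scale0r.
  exists (a *: row_ebase c); first by rewrite unitmxZ ?unitfE // row_ebase_unit.
  by rewrite -scalemxAr ec.
have step2 : (#|[set R : 'M[F]_(m.+2) | ~~ (c <= R)%MS]| <=
              #|[set R : 'M[F]_(m.+2) | ~~ (e1 <= R)%MS]|)%N.
  rewrite -(card_imset _ (can_inj (mulmxKV Qu))).
  apply: subset_leq_card; apply/subsetP => R' /imsetP [R]; rewrite !inE => hR ->.
  apply: contra hR => h; rewrite cQ -(mulmxKV Qu R); exact: submxMr.
pose g (R : 'M[F]_(m.+2)) :=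
  (lsubmx (R : 'M_(m.+2, 1 + (1 + m))),
   (lsubmx (rsubmx (R : 'M_(m.+2, 1 + (1 + m))) : 'M_(m.+2, 1 + m)),
    rsubmx (rsubmx (R : 'M_(m.+2, 1 + (1 + m))) : 'M_(m.+2, 1 + m)))).
have ginj : injective g.
  by move=> R1 R2 [h1 h2 h3]; apply: (@split3_inj _ 1 1 m).
have step3 : (#|[set R : 'M[F]_(m.+2) | ~~ (e1 <= R)%MS]| <=
  #|[set x : 'cV[F]_(m.+2) * ('cV[F]_(m.+2) * 'M[F]_(m.+2, m)) |
      [exists w : 'cV[F]_(1 + m), x.1 == row_mx x.2.1 x.2.2 *m w]]|)%N.
  rewrite -(card_imset _ ginj).
  apply: subset_leq_card; apply/subsetP => x /imsetP [R]; rewrite !inE => hR ->.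
  have [w hw] := @col_dep _ (1 + m) R hR.
  by apply/existsP; exists w; rewrite /= hsubmxK hw.
have := leq_mul (leq_trans (leq_trans step2 step3) (core_count m)) (leqnn (q ^ 4)).
move/leq_trans; apply; apply: eq_leq.
have E : (q ^ (m.+2 * m.+2) = q ^ (m.+2 * m) * q ^ m * q ^ m * q ^ 4)%N.
  by rewrite -!expnD; congr expn; nia.
rewrite E; set A := (q ^ (m.+2 * m))%N; set B := (q ^ m)%N; set C := (q ^ 4)%N.
set Z := (q * q * q - q + 1)%N; nia.
Qed.

Lemma disjP (U : finType) (A B : {set U}) :
  reflect (forall x, x \in A -> x \in B -> False) [disjoint A & B].
Proof.
rewrite -setI_eq0; apply: (iffP eqP) => [h x xA xB | h].
  have : x \in A :&: B by rewrite inE xA xB.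
  by rewrite h inE.
apply/setP => x; rewrite !inE; apply/negP => /andP [xA xB]; exact: h xA xB.
Qed.

Lemma card_bigcup_le (U : finType) T (X : 'I_T -> {set U}) w :
  (forall i, #|X i| <= w)%N -> (#|\bigcup_(i < T) X i| <= T * w)%N.
Proof.
elim: T X => [|T IH] X hX; first by rewrite big_ord0 cards0.
rewrite big_ord_recr /= mulSn addnC.
apply: leq_trans (leq_card_setU _ _).1 _.
by rewrite leq_add // IH.
Qed.

Lemma bq_le k s (B : {set 'rV[F]_k}) : blocking s B -> (bq F k s <= #|B|)%N.
Proof.
move=> bB; rewrite /bq; case: arg_minnP => [|B0 _ minB]; last exact: minB.
apply/forallP => v; apply/forallP => U; apply/implyP => _.
by apply/existsP; exists v; rewrite inE /in_affine subrr sub0mx.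
Qed.

Lemma points_bound k s T : (0 < s)%N -> (s <= k)%N ->
  (q ^ (k * s) * (q ^ s - 1) * (q ^ s - 1) ^ T < #|GLset s| * (q ^ s) ^ T)%N ->
  (bq F k s <= T.+1)%N.
Proof.
move=> s0 sk hin.
have Om0 : (0 < #|'rV[F]_k|)%N.
  by rewrite card_mx expn_gt0 (leq_trans _ (card_finNzRing_gt1 F)).
have hm : forall (M : 'M[F]_(k,s)) (c : 'rV[F]_s), row_full M -> c != 0%R ->
    (#|[set w | [disjoint [set w] & Hset M c]]| * q ^ s <= (q ^ s - 1) * #|'rV[F]_k|)%N.
  move=> M c fM c0.
  have := @fiber_count 1 k s M (fun Y => Y != c) fM.
  rewrite !mul1n card_mx mul1n.
  have -> : #|[set Y : 'rV[F]_s | Y != c]| = (q ^ s - 1)%N.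
    rewrite (_ : [set Y | Y != c] = [set~ c]); last by apply/setP => Y; rewrite !inE.
    by rewrite cardsC1 card_mx mul1n subn1.
  move=> <-; apply: eq_leq; congr (_ * _)%N; apply: eq_card => x.
  by rewrite !inE disjoints1 inE.
have [t bt] := @generic k s T 'rV[F]_k (fun x => [set x]) (q ^ s - 1) (q ^ s) sk hm Om0 hin.
apply: leq_trans (bq_le bt) _.
rewrite /Bset cardsU1; apply: (leq_add (leq_b1 _)).
by rewrite -[X in (_ <= X)%N]muln1; apply: card_bigcup_le => i; rewrite cards1.
Qed.

Lemma subsp_bound k s T : (2 <= s)%N -> (s <= k)%N ->
  (q ^ (k * s) * (q ^ s - 1) * (q * q * q - q + 1) ^ T < #|GLset s| * (q ^ 4) ^ T)%N ->
  (bq F k s <= 1 + T * (q ^ s - 1))%N.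
Proof.
case: s => [|[|m]] // _ sk hin.
pose S (A : 'M[F]_(m.+2, k)) := [set y *m A | y in [set y : 'rV[F]_(m.+2) | y != 0]].
have Om0 : (0 < #|'M[F]_(m.+2, k)|)%N.
  by rewrite card_mx expn_gt0 (leq_trans _ (card_finNzRing_gt1 F)).
have hm : forall (M : 'M[F]_(k,m.+2)) (c : 'rV[F]_(m.+2)), row_full M -> c != 0%R ->
    (#|[set w | [disjoint S w & Hset M c]]| * q ^ 4 <= (q * q * q - q + 1) * #|'M[F]_(m.+2, k)|)%N.
  move=> M c fM c0.
  have -> : #|[set w | [disjoint S w & Hset M c]]| = #|[set A : 'M[F]_(m.+2, k) | ~~ (c <= A *m M)%MS]|.
    apply: eq_card => A; rewrite !inE; apply/idP/idP.
      move=> dj; apply/negP => /submxP [D cD].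
      have D0 : D != 0 by apply: contra c0 => /eqP D0; rewrite cD D0 mul0mx.
      move/disjP: dj; apply; first by apply/imsetP; exists D; rewrite ?inE.
      by rewrite /Hset inE -mulmxA cD.
    move=> nc; apply/disjP => x /imsetP [y _ ->]; rewrite /Hset inE => /eqP e.
    by move/negP: nc; apply; apply/submxP; exists y; rewrite -e mulmxA.
  have := @fiber_count m.+2 k m.+2 M (fun R => ~~ (c <= R)%MS) fM.
  have := miss_count c0.
  rewrite card_mx => h1 h2.
  rewrite -(leq_pmul2r (_ : 0 < q ^ (m.+2 * m.+2))%N); last first.
    by rewrite expn_gt0 (leq_trans _ (card_finNzRing_gt1 F)).
  rewrite mulnAC h2 mulnAC.
  by rewrite [X in (_ <= X)%N]mulnAC leq_mul2r h1 orbT.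
have [t bt] := @generic k m.+2 T 'M[F]_(m.+2, k) S (q * q * q - q + 1) (q ^ 4) sk hm Om0 hin.
apply: leq_trans (bq_le bt) _.
rewrite /Bset cardsU1; apply: (leq_add (leq_b1 _)).
apply: card_bigcup_le => i.
apply: leq_trans (leq_imset_card _ _) _.
rewrite (_ : [set y : 'rV[F]_(m.+2) | y != 0] = [set~ 0]); last by apply/setP => Y; rewrite !inE.
by rewrite cardsC1 card_mx mul1n subn1.
Qed.

Lemma GL_lower s : (0 < s)%N -> (q ^ (s * s) * (q * q - q - 1) <= #|GLset s| * (q * q))%N.
Proof.
move=> s0; have q2 := card_finNzRing_gt1 F.
have h := @prod_lower q s q2 s0.
rewrite card_GLset // card_GL //.
change (\prod_(1 <= i < s.+1) (q ^ i - 1))%N with (Pr q s).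
have e1 : (q ^ (s * s) = q ^ 'C(s, 2) * q ^ 'C(s.+1, 2))%N by rewrite -expnD C2.
have e2 : (q ^ (s + 3) = q ^ (s + 1) * (q * q))%N by rewrite -[(q * q)%N]/(q ^ 2)%N -expnD -addnA.
rewrite e2 in h.
have h' := leq_mul (leqnn (q ^ 'C(s, 2))) h.
have p0 : (0 < q ^ (s + 1))%N by rewrite expn_gt0 (leq_trans _ q2).
rewrite -(leq_pmul2r p0) e1.
set a := (q ^ 'C(s, 2))%N in h' *; set b := (q ^ 'C(s.+1, 2))%N in h' *.
set c := (q ^ (s + 1))%N in h' *; set K := (q * q - q - 1)%N in h' *.
set P := Pr q s in h' *.
nia.
Qed.

End Counting.

Theorem theorem1p1 (F : finFieldType) (k s : nat) :
  (2 <= s)%N -> (s <= k)%N ->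
  let q := INR #|F| in
  (#|F| = 2%N ->
     Rle (INR (bq F k s))
         (Rplus (Rdiv (INR (s * (k - s) + s + 2))
                      (logb q (Rdiv (pow q s) (Rminus (pow q s) 1))))
                1)) /\
  ((3 <= #|F|)%N ->
     Rle (INR (bq F k s))
         (Rplus (Rdiv (Rmult (Rminus (pow q s) 1) (INR (s * (k - s) + s + 2)))
                      (logb q (Rdiv (pow q 4)
                                    (Rplus (Rminus (pow q 3) q) 1))))
                1)).
Proof.
move=> s2 sk q; have s0 : (0 < s)%N by apply: leq_trans s2.
have Q2 := card_finNzRing_gt1 F.
set n2 := (s * (k - s) + s + 2)%N.
have expeq : (k * s + s + 2 = s * s + n2)%N.
  rewrite /n2; have [d ->] : exists d, k = (s + d)%N by exists (k - s)%N; lia.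
  rewrite addKn; lia.
have SS0 : (0 < #|F| ^ (s * s))%N by rewrite expn_gt0 (leq_trans _ Q2).
split => hq.
- have B0 : (0 < 2 ^ s - 1)%N by rewrite subn_gt0 -[1%N]/(2 ^ 0)%N ltn_exp2l.
  have B1 : (2 ^ s - 1 < 2 ^ s)%N by rewrite ltn_subrL expn_gt0.
  have [T [key hT]] := @choose_T 2 (2 ^ s - 1) (2 ^ s) n2 isT B0 B1.
  have hb : (bq F k s <= T.+1)%N.
    apply: points_bound => //; rewrite hq.
    apply: (@fin2 _ _ _ _ _ (2 ^ (s * s)) (2 ^ n2)%N).
    + by rewrite expn_gt0.
    + by rewrite expn_gt0.
    + by rewrite -[4%N]/(2 ^ 2)%N -!expnD; congr expn; lia.
    + by move: key; rewrite !expnSr.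
    + by have := GL_lower F s0; rewrite hq muln1.
  rewrite /q hq -INR_expn INR_sub1 ?expn_gt0 //.
  exact: fin_real1 hb hT.
- pose N := (#|F| * #|F| * #|F| - #|F| + 1)%N.
  have N0 : (0 < N)%N by rewrite /N addn1.
  have ND : (N < #|F| ^ 4)%N.
    rewrite /N !expnS expn0 muln1; move: hq; set Q := #|F|; move=> hq; nia.
  have [T [key hT]] := @choose_T #|F| N (#|F| ^ 4) n2 Q2 N0 ND.
  have hb : (bq F k s <= 1 + T * (#|F| ^ s - 1))%N.
    apply: subsp_bound => //.
    apply: (@fin3 _ (#|F| ^ s) _ _ _ (#|F| ^ (s * s)) (#|F| ^ n2) N (#|F| ^ 4)
                  (#|F| * #|F| - #|F| - 1) (#|F| * #|F|)) => //.
    + by rewrite muln_gt0 (leq_trans _ Q2).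
    + by rewrite -[(#|F| * #|F|)%N]/(#|F| ^ 2)%N -!expnD; congr expn; lia.
    + by move: key; rewrite !expnSr.
    + exact: GL_lower.
    + exact: NN_ineq.
  rewrite /q INR_cubic ?(leq_trans _ Q2) //.
  rewrite -!INR_expn INR_sub1 ?expn_gt0 ?(leq_trans _ Q2) // rdiv_mul.
  exact: fin_real2 hb hT.
Qed.
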